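(* For $\tau\in\mathbf{R}$, $L\geq1$ and $u\in\mathbf{C}$, let $B_{i\tau}(u)=\sum_{\ell\leq 2L,\ \ell\text{ prime}}\mathrm{sign}(d_{i\tau}(\ell))\,d_u(\ell)$. Then for $L$ large enough, $B_{i\tau}(it)\gg L/\log^6L$ uniformly for $t,\tau\in\mathbf{R}$ satisfying $|t-\tau|\ll 1/\log^7L$ and $|\tau|\leq L^{1/3}$.
   Context: $d_u(\ell)=\sum_{ab=\ell}(a/b)^u$, so for a prime $\ell$ and $\tau\in\mathbf{R}$, $d_{i\tau}(\ell)=\ell^{i\tau}+\ell^{-i\tau}=2\cos(\tau\log\ell)$ is real; $\mathrm{sign}$ denotes the sign of a real number. *)

(* Defs.v *)
From Stdlib Require Import Reals List ZArith Znumtheory Arith.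
From Coquelicot Require Import Coquelicot.
Open Scope R_scope.

Definition cpow (x : R) (u : C) : C :=
  (exp (Re u * ln x) * cos (Im u * ln x),
   exp (Re u * ln x) * sin (Im u * ln x)).

(* d_u(n) = sum_{ab = n} (a/b)^u, summing over the divisors a of n (b = n/a). *)
Definition d_fun (u : C) (n : nat) : C :=
  fold_right Cplus (RtoC 0)
    (map (fun a => if Nat.eq_dec (n mod a) 0
                   then cpow (INR a / INR (n / a)) u else RtoC 0)
         (seq 1 n)).

Definition sign (x : R) : R :=
  if Rlt_dec 0 x then 1 else if Rlt_dec x 0 then -1 else 0.

Definition is_primeb (n : nat) : bool :=
  if prime_dec (Z.of_nat n) then true else false.

(* B_{i tau}(u) = sum_{l <= 2L, l prime} sign(d_{i tau}(l)) d_u(l).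
   d_{i tau}(l) is real for prime l; we take its real part. *)
Definition B (tau L : R) (u : C) : C :=
  fold_right Cplus (RtoC 0)
    (map (fun l => if is_primeb l then
                     if Rle_dec (INR l) (2 * L)
                     then Cmult (RtoC (sign (Re (d_fun ((0%R, tau) : C) l))))
                                (d_fun u l)
                     else RtoC 0
                   else RtoC 0)
         (seq 0 (S (Z.to_nat (up (2 * L)))))).

(* Main.v *)
Require Import Defs.
From Stdlib Require Import Reals Lia Lra ZArith Znumtheory List.
From Coquelicot Require Import Coquelicot.
From mathcomp Require Import ssreflect.
From mathcomp Require ssrfun ssrbool eqtype ssrnat seq div prime binomial bigop zify.

Module MC.
Import ssrfun ssrbool eqtype ssrnat seq div prime binomial bigop zify.
Local Open Scope nat_scope.

Lemma leg_term (a q : nat) : 0 < q -> (2*a) %/ q <= 2 * (a %/ q) + 1.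
Proof. move=> hq. rewrite {1}(divn_eq a q) mulnDr mulnA divnMDl //.
have : (2 * (a %% q)) %/ q < 2 by rewrite ltn_divLR // ltn_pmul2l // ltn_pmod.
lia. Qed.

Lemma logn_fact_ext p n N : prime p -> n <= N ->
  logn p n`! = \sum_(1 <= k < N.+1) n %/ p ^ k.
Proof.
move=> pp hnN. have h1 : 1 <= n.+1 by []. have h2 : n.+1 <= N.+1 by lia.
rewrite logn_fact // (big_cat_nat h1 h2) /=.
have -> : \sum_(n.+1 <= k < N.+1) n %/ p ^ k = 0.
  rewrite big_nat_cond big1 // => k /andP[/andP[hk _] _].
  apply: divn_small. apply: leq_trans hk _. apply: ltnW. apply: ltn_expl. exact: prime_gt1.
by rewrite addn0.
Qed.

Lemma vp_bound p n : prime p -> 0 < n -> p ^ logn p 'C(n.*2, n) <= n.*2.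
Proof.
move=> pp hn. have p1 := prime_gt1 pp.
set m := trunc_log p n.*2.
have hm : p ^ m <= n.*2 by apply: trunc_logP => //; lia.
apply: leq_trans hm. rewrite leq_exp2l //.
have hC : 'C(n.*2, n) * (n`! * n`!) = n.*2`!.
  by have := bin_fact (n:=n.*2) (m:=n); rewrite -addnn addKn; apply; lia.
have hl : logn p n.*2`! = logn p 'C(n.*2, n) + (logn p n`! + logn p n`!).
  rewrite -hC lognM ?bin_gt0 ?muln_gt0 ?fact_gt0 //; last lia.
  by rewrite lognM ?fact_gt0.
rewrite (@logn_fact_ext p n.*2 n.*2 pp (leqnn _)) in hl.
rewrite (@logn_fact_ext p n n.*2 pp (_ : n <= n.*2)) in hl; last lia.
set Sn := \sum_(1 <= k < n.*2.+1) n %/ p ^ k in hl.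
have hS : \sum_(1 <= k < n.*2.+1) n.*2 %/ p ^ k <=
          \sum_(1 <= k < n.*2.+1) (2 * (n %/ p ^ k) + (if k <= m then 1 else 0)).
  apply: leq_sum => k _. case: ifP => hk.
    rewrite -muln2 mulnC. apply: leg_term. by rewrite expn_gt0; lia.
  rewrite divn_small ?addn0 //. rewrite ltnNge. apply/negP => h.
  have := trunc_log_max p1 h. by rewrite -/m hk.
rewrite big_split /= -big_distrr /= -/Sn -big_mkcond /= sum1_count in hS.
have hc : count (fun k => k <= m) (index_iota 1 n.*2.+1) <= m.
  rewrite -size_filter.
  have -> : m = size (iota 1 m) by rewrite size_iota.
  apply: uniq_leq_size; first by apply: filter_uniq; apply: iota_uniq.
  move=> k. rewrite mem_filter mem_index_iota mem_iota => /andP[h1 /andP[h2 _]]. apply/andP; split; [exact h2 | rewrite size_iota in h1; lia].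
lia.
Qed.

Lemma mc_prime_is_primeb p : prime p -> is_primeb p = true.
Proof.
move=> /primeP [hp1 hd]. rewrite /is_primeb. case: prime_dec => // hn; exfalso; apply: hn.
apply/prime_alt. split; first lia.
move=> m [hm1 hm2] [z hz].
have hd' : (Z.to_nat m) %| p.
  apply/dvdnP. exists (Z.to_nat z). lia.
move: (hd _ hd') => /orP [/eqP h|/eqP h]; lia.
Qed.

Lemma C_ge n : 2^n <= 'C(n.*2, n).
Proof.
elim: n => [|n IH] //.
have hb : 'C(n.*2, n) <= 'C(n.*2.+1, n).
  case: n {IH} => [|k] //. rewrite binS. lia.
have hs : 'C(n.*2.+1, n.+1) = 'C(n.*2.+1, n).
  have := bin_sub (n:=n.*2.+1) (m:=n). rewrite -addnn -addSn addnK. apply. lia.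
rewrite doubleS binS hs expnS. lia.
Qed.
Lemma prod_const (r : seq nat) c : \prod_(i <- r) c = c ^ size r.
Proof. elim: r => [|a r IH]; first by rewrite big_nil. by rewrite big_cons IH expnS. Qed.
Lemma prod_le (r : seq nat) (F : nat -> nat) c :
  (forall i, i \in r -> F i <= c) -> \prod_(i <- r) F i <= c ^ size r.
Proof.
elim: r => [|a r IH] h; first by rewrite big_nil.
rewrite big_cons expnS. apply: leq_mul; first by apply: h; rewrite inE eqxx.
apply: IH => i hi. apply: h. by rewrite inE hi orbT.
Qed.
Lemma cheb n : 0 < n -> 2^n <= (n.*2) ^ (count is_primeb (iota 0 n.*2.+1)).
Proof.
move=> hn. apply: leq_trans (C_ge n) _.
have hC : 0 < 'C(n.*2, n) by rewrite bin_gt0; lia.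
rewrite {1}(prod_prime_decomp hC) prime_decompE big_map /=.
apply: (@leq_trans (n.*2 ^ size (primes 'C(n.*2, n)))).
  apply: prod_le => p. rewrite mem_primes => /andP[pp _]. exact: vp_bound.
rewrite leq_exp2l; last lia.
rewrite -size_filter. apply: uniq_leq_size; first exact: primes_uniq.
move=> p hp. have := hp. rewrite mem_primes => /andP[pp _].
rewrite mem_filter (mc_prime_is_primeb _ pp) /= mem_iota /=.
have h1 := vp_bound _ _ pp hn.
have h2 : p <= p ^ logn p 'C(n.*2, n).
  rewrite -{1}(expn1 p) leq_exp2l ?prime_gt1 // logn_gt0 //.
rewrite prime_gt0 //= add1n ltnS. exact: leq_trans h2 h1.
Qed.
Lemma expn_pow m n : expn m n = Nat.pow m n.
Proof. elim: n => [|n IH] //. by rewrite expnS IH /= mulnE. Qed.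
Lemma count_iota_len (a : pred nat) m n : count a (iota m n) = length (List.filter a (List.seq m n)).
Proof. elim: n m => [|n IH] m //=. rewrite IH. by case: (a m). Qed.
Lemma cheb_std n : (0 < n)%coq_nat ->
  (Nat.pow 2 n <= Nat.pow (Nat.mul 2 n) (length (List.filter is_primeb (List.seq 0 (Nat.add (Nat.mul 2 n) 1)))))%coq_nat.
Proof.
move=> /ltP hn. apply/leP. rewrite -!expn_pow -count_iota_len.
have -> : Nat.add (Nat.mul 2 n) 1 = n.*2.+1 by lia.
have -> : Nat.mul 2 n = n.*2 by lia.
exact: cheb.
Qed.

End MC.

From mathcomp Require Import ssrbool.
Open Scope R_scope.

Definition rsum (s : list nat) (f : nat -> R) : R := fold_right Rplus 0 (List.map f s).

Lemma rsum_nil f : rsum nil f = 0. Proof. reflexivity. Qed.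
Lemma rsum_cons a s f : rsum (a :: s) f = f a + rsum s f. Proof. reflexivity. Qed.
Lemma rsum_app s1 s2 f : rsum (s1 ++ s2) f = rsum s1 f + rsum s2 f.
Proof. induction s1 as [|a s IH]; simpl. unfold rsum; simpl; lra.
unfold rsum in *; simpl; rewrite IH; lra. Qed.
Lemma rsum_le s f g : (forall x, In x s -> f x <= g x) -> rsum s f <= rsum s g.
Proof. induction s as [|a s IH]; intros H. unfold rsum; simpl; lra.
rewrite !rsum_cons. apply Rplus_le_compat. apply H; simpl; auto.
apply IH; intros; apply H; simpl; auto. Qed.
Lemma rsum_ext s f g : (forall x, In x s -> f x = g x) -> rsum s f = rsum s g.
Proof. induction s as [|a s IH]; intros H. reflexivity.
rewrite !rsum_cons. rewrite H; simpl; auto. rewrite IH; auto; intros; apply H; simpl; auto. Qed.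
Lemma rsum_plus s f g : rsum s (fun x => f x + g x) = rsum s f + rsum s g.
Proof. induction s as [|a s IH]. unfold rsum; simpl; lra. rewrite !rsum_cons IH; lra. Qed.
Lemma rsum_scal s c f : rsum s (fun x => c * f x) = c * rsum s f.
Proof. induction s as [|a s IH]. unfold rsum; simpl; lra. rewrite !rsum_cons IH; lra. Qed.
Lemma rsum_const s c : rsum s (fun _ => c) = c * INR (length s).
Proof. induction s as [|a s IH]. unfold rsum; simpl; lra. rewrite rsum_cons IH.
simpl length. rewrite S_INR. lra. Qed.
Lemma rsum_nonneg s f : (forall x, In x s -> 0 <= f x) -> 0 <= rsum s f.
Proof. intros H. replace 0 with (rsum s (fun _ => 0)). apply rsum_le; auto.
rewrite rsum_const; lra. Qed.
Lemma rsum_ge_term s f k : In k s -> (forall x, In x s -> 0 <= f x) -> f k <= rsum s f.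
Proof. induction s as [|a s IH]; intros Hk H. destruct Hk.
rewrite rsum_cons. destruct Hk as [<-|Hk].
have := rsum_nonneg s f (fun x hx => H x (or_intror hx)). lra.
have := IH Hk (fun x hx => H x (or_intror hx)). have := H a (or_introl eq_refl). lra. Qed.
Lemma rsum_swap s1 s2 (F : nat -> nat -> R) :
  rsum s1 (fun x => rsum s2 (fun y => F x y)) = rsum s2 (fun y => rsum s1 (fun x => F x y)).
Proof. induction s1 as [|a s IH]. rewrite rsum_nil. symmetry.
  have := rsum_const s2 0. rewrite Rmult_0_l. intros <-. apply rsum_ext. intros; reflexivity.
  rewrite rsum_cons IH -rsum_plus. apply rsum_ext. intros; reflexivity. Qed.

Lemma rsum_filter_len (a : nat -> bool) s :
  rsum s (fun x => if a x then 1 else 0) = INR (length (List.filter a s)).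
Proof. induction s as [|x s IH]. reflexivity. rewrite rsum_cons IH. simpl.
destruct (a x); simpl length; try rewrite S_INR; lra. Qed.

Lemma Re_fold s (f : nat -> C) : Re (fold_right Cplus (RtoC 0) (List.map f s)) = rsum s (fun x => Re (f x)).
Proof. induction s as [|a s IH]. reflexivity. rewrite rsum_cons -IH. reflexivity. Qed.
Lemma Im_fold s (f : nat -> C) : Im (fold_right Cplus (RtoC 0) (List.map f s)) = rsum s (fun x => Im (f x)).
Proof. induction s as [|a s IH]. reflexivity. rewrite rsum_cons -IH. reflexivity. Qed.

Lemma is_primeb_ge2 l : is_primeb l = true -> (2 <= l)%nat.
Proof. unfold is_primeb. destruct (prime_dec (Z.of_nat l)) as [Hp|]; [|discriminate].
intros _. have := prime_ge_2 _ Hp. lia. Qed.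

Lemma is_primeb_nodiv l a : is_primeb l = true -> (1 < a < l)%nat -> (l mod a <> 0)%nat.
Proof. unfold is_primeb. destruct (prime_dec (Z.of_nat l)) as [Hp|]; [|discriminate].
intros _ Ha Hm. apply prime_alt in Hp as [_ H]. apply (H (Z.of_nat a)). lia.
exists (Z.of_nat (l / a)). have := Nat.div_mod_eq l a. set q := (l / a)%nat. rewrite Hm. nia. Qed.

Lemma sum_divisors_prime l (G : nat -> R) : is_primeb l = true ->
  rsum (List.seq 1 l) (fun a => match Nat.eq_dec (l mod a) 0 with left _ => G a | right _ => 0 end) = G 1%nat + G l.
Proof.
intros Hp. have H2 := is_primeb_ge2 l Hp.
destruct l as [|[|k]]; try lia.
change (List.seq 1 (S (S k))) with (1%nat :: List.seq 2 (S k)).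
rewrite seq_S rsum_cons rsum_app rsum_cons rsum_nil.
rewrite (rsum_ext _ _ (fun _ => 0)).
2: { intros a Ha. apply in_seq in Ha. destruct (Nat.eq_dec _ 0) as [e|e]; auto.
  exfalso. apply (is_primeb_nodiv (S (S k)) a Hp); auto; lia. }
rewrite rsum_const.
destruct (Nat.eq_dec (S (S k) mod 1) 0) as [_|e]; [|exfalso; apply e; apply Nat.mod_1_r].
replace (2 + k)%nat with (S (S k)) by lia.
destruct (Nat.eq_dec (S (S k) mod (S (S k))) 0) as [_|e]; [|exfalso; apply e; apply Nat.mod_same; lia].
lra.
Qed.

Lemma d_fun_prime_Re l t : is_primeb l = true ->
  Re (d_fun ((0%R, t) : C) l) = 2 * cos (t * ln (INR l)).
Proof.
intros Hp. have H2 := is_primeb_ge2 l Hp. have Hl : 0 < INR l by apply lt_0_INR; lia.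
unfold d_fun. rewrite Re_fold.
rewrite (rsum_ext _ _ (fun a => match Nat.eq_dec (l mod a) 0 with left _ => Re (cpow (INR a / INR (l / a)) ((0%R, t) : C)) | right _ => 0 end)).
2: { intros a _. destruct (Nat.eq_dec _ 0); reflexivity. }
rewrite sum_divisors_prime; auto.
rewrite Nat.div_1_r Nat.div_same; [|lia].
unfold cpow; simpl Re; simpl Im.
rewrite !Rmult_0_l exp_0 !Rmult_1_l. simpl INR.
replace (1 / INR l) with (/ INR l) by (unfold Rdiv; ring).
rewrite ln_Rinv; auto. replace (INR l / 1) with (INR l) by field.
replace (t * - ln (INR l)) with (- (t * ln (INR l))) by ring. rewrite cos_neg. ring.
Qed.

Lemma d_fun_prime_Im l t : is_primeb l = true ->
  Im (d_fun ((0%R, t) : C) l) = 0.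
Proof.
intros Hp. have H2 := is_primeb_ge2 l Hp. have Hl : 0 < INR l by apply lt_0_INR; lia.
unfold d_fun. rewrite Im_fold.
rewrite (rsum_ext _ _ (fun a => match Nat.eq_dec (l mod a) 0 with left _ => Im (cpow (INR a / INR (l / a)) ((0%R, t) : C)) | right _ => 0 end)).
2: { intros a _. destruct (Nat.eq_dec _ 0); reflexivity. }
rewrite sum_divisors_prime; auto.
rewrite Nat.div_1_r Nat.div_same; [|lia].
unfold cpow; simpl Re; simpl Im.
rewrite !Rmult_0_l exp_0 !Rmult_1_l. simpl INR.
replace (1 / INR l) with (/ INR l) by (unfold Rdiv; ring).
rewrite ln_Rinv; auto. replace (INR l / 1) with (INR l) by field.
replace (t * - ln (INR l)) with (- (t * ln (INR l))) by ring. rewrite sin_neg. ring.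
Qed.

Definition hfun (tau t L : R) (l : nat) : R :=
  if is_primeb l then match Rle_dec (INR l) (2 * L) with
    left _ => Defs.sign (2 * cos (tau * ln (INR l))) * (2 * cos (t * ln (INR l)))
  | right _ => 0 end else 0.

Lemma B_Im tau L t : Im (B tau L ((0%R, t) : C)) = 0.
Proof.
unfold B. rewrite Im_fold. rewrite (rsum_ext _ _ (fun _ => 0)).
2: { intros l _. destruct (is_primeb l) eqn:Hp; [|reflexivity].
  destruct (Rle_dec _ _); [|reflexivity].
  have h1 := d_fun_prime_Im l t Hp. unfold Im in h1.
  unfold Cmult, RtoC; simpl Im; simpl Re. rewrite h1. ring. }
rewrite rsum_const; ring.
Qed.

Lemma B_Re tau L t : Re (B tau L ((0%R, t) : C)) =
  rsum (List.seq 0 (S (Z.to_nat (up (2 * L))))) (hfun tau t L).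
Proof.
unfold B. rewrite Re_fold. apply rsum_ext. intros l _. unfold hfun.
destruct (is_primeb l) eqn:Hp; [|reflexivity].
destruct (Rle_dec _ _); [|reflexivity].
have h1 := d_fun_prime_Im l t Hp. unfold Im in h1.
have h2 := d_fun_prime_Re l t Hp. unfold Re in h2.
have h3 := d_fun_prime_Re l tau Hp.
unfold Cmult, RtoC; simpl Im; simpl Re. rewrite h3. unfold Re. rewrite h1 h2. ring.
Qed.

Lemma abs_sin_le_pos x : 0 <= x -> Rabs (sin x) <= x.
Proof.
intros hx. destruct hx as [hx|<-]; [|rewrite sin_0 Rabs_R0; lra].
have h1 := sin_lt_x x ltac:(lra). have := SIN_bound x. intros [hb1 hb2].
destruct (Rle_dec 1 x). apply Rabs_le; split; lra.
have : 0 < sin x. apply sin_gt_0; [lra|]. have := PI2_1. lra.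
intros. rewrite Rabs_right; lra.
Qed.

Lemma abs_sin_le x : Rabs (sin x) <= Rabs x.
Proof.
destruct (Rle_dec 0 x). rewrite (Rabs_right x); [|lra]. apply abs_sin_le_pos; lra.
rewrite -(Rabs_Ropp x) -(Rabs_Ropp (sin x)) -sin_neg. rewrite (Rabs_right (-x)); [|lra].
apply abs_sin_le_pos; lra.
Qed.

Lemma cos_diff_le a b : Rabs (cos a - cos b) <= Rabs (a - b).
Proof.
rewrite form2. rewrite !Rabs_mult.
have h1 := abs_sin_le ((a - b) / 2). have h2 := SIN_bound ((a + b) / 2).
have h3 : Rabs (sin ((a + b) / 2)) <= 1 by apply Rabs_le; split; lra.
have h4 : Rabs ((a - b) / 2) = Rabs (a - b) / 2.
  unfold Rdiv. rewrite Rabs_mult Rabs_inv (Rabs_right 2); lra.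
rewrite Rabs_Ropp (Rabs_right 2); [|lra].
have := Rabs_pos (sin ((a - b) / 2)). have := Rabs_pos (sin ((a + b) / 2)). nra.
Qed.

Lemma sign_bound c c' : 2 * Rabs c - 2 * Rabs (c - c') <= Defs.sign (2 * c) * (2 * c').
Proof.
unfold Defs.sign. destruct (Rlt_dec 0 (2*c)).
- rewrite Rabs_right; [|lra]. have := Rle_abs (c - c'). lra.
- destruct (Rlt_dec (2*c) 0).
  + rewrite Rabs_left; [|lra]. have := Rle_abs (c' - c). rewrite Rabs_minus_sym. lra.
  + have -> : c = 0 by lra. rewrite Rabs_R0 Rminus_0_l Rabs_Ropp. have := Rabs_pos c'. lra.
Qed.

Lemma cos_ge_half x : 0 <= x <= 1 -> 1/2 <= cos x.
Proof.
intros hx. replace x with (2 * (x/2)) by field. rewrite cos_2a_sin.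
have h := abs_sin_le (x/2). rewrite (Rabs_right (x/2)) in h; [|lra].
have : sin (x/2) * sin (x/2) <= 1/4.
  destruct (Rle_dec 0 (sin (x/2))).
  rewrite Rabs_right in h; [|lra]. nra. rewrite Rabs_left in h; [|lra]. nra.
lra.
Qed.

Lemma sin_ge_lin z : 0 <= z <= 1 -> z / 2 <= sin z.
Proof.
intros hz. have hpi := PI2_1.
have := sin_bound z 0 ltac:(lra) ltac:(lra). intros [h _].
unfold sin_approx, sin_term in h. simpl in h. nra.
Qed.

Lemma cos_small_near x eps : 0 <= x < PI -> eps <= 1/2 -> Rabs (cos x) < eps ->
  Rabs (x - PI/2) < 2 * eps.
Proof.
intros hx he hc. rewrite -sin_shift in hc.
set y := PI / 2 - x in hc.
have hpi := PI2_1.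
have hz : Rabs (sin y) = sin (Rabs y).
  destruct (Rle_dec 0 y).
  - rewrite (Rabs_right y); [|lra]. rewrite Rabs_right //. apply Rle_ge, sin_ge_0; unfold y in *; lra.
  - rewrite (Rabs_left y); [|lra]. rewrite sin_neg Rabs_left //.
    apply sin_lt_0_var; unfold y in *; lra.
rewrite hz in hc. rewrite Rabs_minus_sym. fold y.
have hy : Rabs y <= PI/2. apply Rabs_le; unfold y; split; lra.
destruct (Rle_dec (Rabs y) 1).
- have := sin_ge_lin (Rabs y) (conj (Rabs_pos y) r). lra.
- have h1 := sin_ge_lin 1 ltac:(lra).
  have h2 : sin 1 <= sin (Rabs y). apply sin_incr_1; lra.
  lra.
Qed.

Lemma exp_small x : 0 <= x <= 1/2 -> exp x <= 1 + 2 * x.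
Proof.
intros hx. have h1 := exp_ineq1_le (-x).
have h2 : exp x * exp (-x) = 1 by rewrite -exp_plus; replace (x + - x) with 0 by ring; apply exp_0.
have := exp_pos x. nra.
Qed.

Definition Rleb (x y : R) : bool := match Rle_dec x y with left _ => true | right _ => false end.
Definition Rltb (x y : R) : bool := match Rlt_dec x y with left _ => true | right _ => false end.
Lemma Rleb_true x y : Rleb x y = true <-> x <= y.
Proof. unfold Rleb; destruct (Rle_dec x y); split; auto; discriminate. Qed.
Lemma Rltb_true x y : Rltb x y = true <-> x < y.
Proof. unfold Rltb; destruct (Rlt_dec x y); split; auto; discriminate. Qed.

Lemma int_count_aux a b s m :
  rsum (List.seq s m) (fun l => if Rleb a (INR l) && Rleb (INR l) b then 1 else 0)
  <= Rmax 0 (b - Rmax a (INR s) + 1).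
Proof.
revert s. induction m as [|m IH]; intros s.
- simpl. unfold rsum; simpl. apply Rmax_l.
- change (List.seq s (S m)) with (s :: List.seq (S s) m). rewrite rsum_cons.
  have := IH (S s). rewrite S_INR. intros H.
  destruct (Rleb a (INR s)) eqn:h1; destruct (Rleb (INR s) b) eqn:h2; simpl;
  try apply Rleb_true in h1; try apply Rleb_true in h2;
  try (assert (~ a <= INR s) by (intro hh; apply Rleb_true in hh; congruence));
  try (assert (~ INR s <= b) by (intro hh; apply Rleb_true in hh; congruence));
  revert H; unfold Rmax; repeat destruct (Rle_dec _ _); intros; lra.
Qed.

Lemma int_count a b s m :
  rsum (List.seq s m) (fun l => if Rleb a (INR l) && Rleb (INR l) b then 1 else 0)
  <= Rmax 0 (b - a + 1).
Proof.
apply Rle_trans with (1 := int_count_aux a b s m).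
unfold Rmax; repeat destruct (Rle_dec _ _); lra.
Qed.

Lemma cos_minus_PI y : cos (y - PI) = - cos y.
Proof. have := neg_cos (y - PI). replace (y - PI + PI) with y by ring. lra. Qed.

Lemma abs_cos_shift th k : Rabs (cos (th - INR k * PI)) = Rabs (cos th).
Proof.
induction k as [|k IH]. simpl. rewrite Rmult_0_l Rminus_0_r. reflexivity.
rewrite S_INR. replace (th - (INR k + 1) * PI) with ((th - INR k * PI) - PI) by ring.
rewrite cos_minus_PI Rabs_Ropp. exact IH.
Qed.

Lemma up_nat r : 0 <= r -> INR (Z.to_nat (up r)) = IZR (up r) /\ r < IZR (up r) <= r + 1.
Proof.
intros hr. destruct (archimed r) as [h1 h2].
have hz : (0 < up r)%Z by apply lt_IZR; lra.
rewrite INR_IZR_INZ Z2Nat.id; [|lia]. split; [reflexivity|lra].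
Qed.

Lemma floor_nat r : 0 <= r -> exists k, INR k <= r < INR k + 1.
Proof.
intros hr. destruct (archimed r) as [h1 h2].
have hz : (0 < up r)%Z by apply lt_IZR; lra.
exists (Z.to_nat (up r - 1)). rewrite INR_IZR_INZ Z2Nat.id; [|lia].
rewrite minus_IZR. simpl IZR. lra.
Qed.

Lemma ind01 (b : bool) : 0 <= (if b then 1 else 0).
Proof. destruct b; lra. Qed.

Definition badf (T L eps : R) (l : nat) : R :=
  if Nat.leb 1 l && Rleb (INR l) (2 * L) && Rltb (Rabs (cos (T * ln (INR l)))) eps then 1 else 0.

Lemma badf_nonneg T L eps l : 0 <= badf T L eps l.
Proof. unfold badf. destruct (_ && _ && _); lra. Qed.

Lemma bad_bound T L eps M : 0 < T -> 1 <= L -> 0 < eps <= 1/2 -> 4 * eps / T <= 1/2 ->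
  rsum (List.seq 0 M) (badf T L eps) <= (T * ln (2 * L) / PI + 1) * (2 * L * (8 * eps / T) + 1).
Proof.
intros hT hL he hd.
have hPI := PI_RGT_0.
set ell := ln (2 * L).
have hell : 0 <= ell. unfold ell. rewrite -ln_1. apply ln_le; lra.
have hr0 : 0 <= T * ell / PI. apply Rmult_le_pos; [apply Rmult_le_pos; lra|]. apply Rlt_le, Rinv_0_lt_compat; lra.
destruct (up_nat _ hr0) as [hK [hK1 hK2]].
set K := Z.to_nat (up (T * ell / PI)) in hK.
set A := fun k : nat => exp ((INR k * PI + PI / 2 - 2 * eps) / T).
set E := exp (4 * eps / T).
have hE : E - 1 <= 8 * eps / T.
  have := exp_small (4 * eps / T). unfold E. intros H.
  have : 0 <= 4 * eps / T by apply Rmult_le_pos; [lra|apply Rlt_le, Rinv_0_lt_compat; lra].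
  intros. have := H ltac:(lra). lra.
have hE1 : 1 <= E. unfold E. have := exp_ineq1_le (4 * eps / T).
  have : 0 <= 4 * eps / T by apply Rmult_le_pos; [lra|apply Rlt_le, Rinv_0_lt_compat; lra].
  lra.
have hTi : 0 < / T by apply Rinv_0_lt_compat.
set ind := fun (k l : nat) => if Rleb (A k) (INR l) && Rleb (INR l) (Rmin (A k * E) (2 * L)) then 1 else 0.
have step1 : forall l, badf T L eps l <= rsum (List.seq 0 K) (fun k => ind k l).
{ intros l. unfold badf.
  destruct (Nat.leb 1 l && Rleb (INR l) (2 * L) && Rltb (Rabs (cos (T * ln (INR l)))) eps) eqn:hb;
    [|apply rsum_nonneg; intros; unfold ind; cbv beta; apply ind01].
  move/andP: hb => [/andP [h1 h2] h3].
  apply Nat.leb_le in h1. apply Rleb_true in h2. apply Rltb_true in h3.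
  have hl : 1 <= INR l by rewrite -INR_1; apply le_INR.
  have hln0 : 0 <= ln (INR l) by rewrite -ln_1; apply ln_le; lra.
  have hln1 : ln (INR l) <= ell by apply ln_le; lra.
  set th := T * ln (INR l) in h3.
  have hth0 : 0 <= th by unfold th; apply Rmult_le_pos; lra.
  have hth1 : th <= T * ell by unfold th; apply Rmult_le_compat_l; lra.
  have hr : 0 <= th / PI by apply Rmult_le_pos; [lra|apply Rlt_le, Rinv_0_lt_compat; lra].
  destruct (floor_nat _ hr) as [k [hk1 hk2]].
  have hx : 0 <= th - INR k * PI < PI.
  { have e : th = (th / PI) * PI by field; lra.
    split; rewrite {1}e; nra. }
  have hc := cos_small_near (th - INR k * PI) eps hx ltac:(lra) ltac:(rewrite abs_cos_shift; exact h3).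
  have hc' : INR k * PI + PI / 2 - 2 * eps < th < INR k * PI + PI / 2 + 2 * eps.
  { apply Rabs_def2 in hc. lra. }
  have hlnl : ln (INR l) = th / T by unfold th; field; lra.
  have hlexp : INR l = exp (th / T) by rewrite -hlnl exp_ln; lra.
  have hkK : (k < K)%nat.
  { apply INR_lt. rewrite hK. have : th / PI <= T * ell / PI.
      apply Rmult_le_compat_r; [apply Rlt_le, Rinv_0_lt_compat; lra|lra].
    lra. }
  apply Rle_trans with (ind k l).
  { unfold ind. replace (Rleb (A k) (INR l)) with true. replace (Rleb (INR l) (Rmin (A k * E) (2 * L))) with true.
    simpl; lra.
    - symmetry. apply Rleb_true. apply Rmin_glb; [|lra].
      rewrite hlexp. unfold A, E. rewrite -exp_plus. apply Rlt_le, exp_increasing.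
      replace ((INR k * PI + PI / 2 - 2 * eps) / T + 4 * eps / T) with ((INR k * PI + PI / 2 + 2 * eps) / T) by (field; lra).
      apply Rmult_lt_compat_r; lra.
    - symmetry. apply Rleb_true. rewrite hlexp. unfold A. apply Rlt_le, exp_increasing.
      apply Rmult_lt_compat_r; lra. }
  apply (rsum_ge_term _ (fun k0 => ind k0 l) k). apply in_seq; lia.
  intros; unfold ind; cbv beta; apply ind01. }
apply Rle_trans with (rsum (List.seq 0 M) (fun l => rsum (List.seq 0 K) (fun k => ind k l))).
{ apply rsum_le; intros; apply step1. }
rewrite rsum_swap.
apply Rle_trans with (rsum (List.seq 0 K) (fun _ => 2 * L * (E - 1) + 1)).
{ apply rsum_le. intros k _. unfold ind.
  apply Rle_trans with (1 := int_count (A k) (Rmin (A k * E) (2 * L)) 0 M).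
  have hA : 0 < A k by apply exp_pos.
  have hAE : A k * E - A k <= 2 * L * (E - 1) \/ 2 * L < A k. { destruct (Rle_dec (A k) (2 * L)). left. nra. right. lra. }
  unfold Rmax, Rmin; repeat destruct (Rle_dec _ _); nra. }
rewrite rsum_const length_seq hK.
have : 0 <= 2 * L * (E - 1) + 1 by nra.
have : 2 * L * (E - 1) + 1 <= 2 * L * (8 * eps / T) + 1 by nra.
nra.
Qed.

Lemma bad_zero T L eps M : 0 <= T -> 1 <= L -> eps < 1/2 -> T * ln (2 * L) <= 1 ->
  rsum (List.seq 0 M) (badf T L eps) = 0.
Proof.
intros hT hL he hTl. have := rsum_const (List.seq 0 M) 0. rewrite Rmult_0_l. intros <-.
apply rsum_ext. intros l _. unfold badf.
destruct (Nat.leb 1 l) eqn:h1; simpl; [|reflexivity].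
destruct (Rleb (INR l) (2 * L)) eqn:h2; simpl; [|reflexivity].
apply Nat.leb_le in h1. apply Rleb_true in h2.
have hl : 1 <= INR l by rewrite -INR_1; apply le_INR.
have hln0 : 0 <= ln (INR l) by rewrite -ln_1; apply ln_le; lra.
have hln1 : ln (INR l) <= ln (2 * L) by apply ln_le; lra.
have hx1 : T * ln (INR l) <= T * ln (2 * L) by apply Rmult_le_compat_l.
have hx0 : 0 <= T * ln (INR l) by apply Rmult_le_pos.
have hc : 1/2 <= cos (T * ln (INR l)) by apply cos_ge_half; split; lra.
unfold Rltb. destruct (Rlt_dec _ _) as [h|h]; [|reflexivity].
rewrite Rabs_right in h; lra.
Qed.

Definition pind (L : R) (l : nat) : R := if is_primeb l && Rleb (INR l) (2 * L) then 1 else 0.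

Lemma prime_count_lb L : 3 <= L ->
  (L - 1) / (2 * ln (2 * L)) <= rsum (List.seq 0 (S (Z.to_nat (up (2 * L))))) (pind L).
Proof.
intros hL.
destruct (floor_nat L ltac:(lra)) as [n [hn1 hn2]].
have hn : (2 <= n)%nat. { apply INR_le. simpl. lra. }
set N := Z.to_nat (up (2 * L)).
destruct (up_nat (2 * L) ltac:(lra)) as [hN [hN1 hN2]]. fold N in hN.
have hnN : (2 * n + 1 <= S N)%nat. { have : (2 * n < N)%nat. apply INR_lt. rewrite mult_INR hN. simpl. lra. lia. }
set P0 := length (List.filter is_primeb (List.seq 0 (2*n+1))).
have hcheb := MC.cheb_std n ltac:(lia).
apply le_INR in hcheb. rewrite !pow_INR in hcheb. fold P0 in hcheb.
have e2 : INR 2 = 2 by simpl; lra. rewrite e2 in hcheb.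
have h2n : 0 < INR (2 * n) by apply lt_0_INR; lia.
have hln := ln_le _ _ (pow_lt 2 n ltac:(lra)) hcheb.
rewrite !ln_pow in hln; [|lra|lra].
have hl2 := ln_lt_2.
have hell : ln (INR (2 * n)) <= ln (2 * L). apply ln_le; auto. rewrite mult_INR; simpl; lra.
have hell0 : 0 < ln (INR (2 * n)). rewrite -ln_1. apply ln_increasing; [lra|]. rewrite mult_INR; simpl. lra.
have hP : INR n / 2 <= INR P0 * ln (2 * L).
  have := pos_INR P0. have := pos_INR n. nra.
have hseq : List.seq 0 (S N) = List.seq 0 (2 * n + 1) ++ List.seq (2 * n + 1) (S N - (2 * n + 1)).
  rewrite -seq_app. f_equal. lia.
rewrite hseq rsum_app.
have h2 : 0 <= rsum (List.seq (2 * n + 1) (S N - (2 * n + 1))) (pind L).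
  apply rsum_nonneg. intros; unfold pind; apply ind01.
have h1 : rsum (List.seq 0 (2 * n + 1)) (pind L) = INR P0.
  unfold P0. rewrite -rsum_filter_len. apply rsum_ext. intros l hl. apply in_seq in hl.
  unfold pind. replace (Rleb (INR l) (2 * L)) with true. by rewrite andbT.
  symmetry. apply Rleb_true. have : (l <= 2 * n)%nat by lia. intros hh. apply le_INR in hh.
  rewrite mult_INR in hh. simpl in hh. lra.
rewrite h1.
have hellp : 0 < ln (2 * L) by lra.
apply Rle_trans with (INR n / (2 * ln (2 * L))).
  apply Rmult_le_compat_r. apply Rlt_le, Rinv_0_lt_compat; lra. lra.
apply Rle_trans with (INR P0 + 0); [|lra].
rewrite Rplus_0_r. unfold Rdiv. rewrite Rinv_mult.
apply (Rmult_le_reg_r (ln (2 * L))); auto.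
have e : INR n * (/ 2 * / ln (2 * L)) * ln (2 * L) = INR n / 2 by field; lra.
rewrite e. lra.
Qed.

Definition goodf (tau L eps : R) (l : nat) : R :=
  if is_primeb l && Rleb (INR l) (2 * L) && Rleb eps (Rabs (cos (tau * ln (INR l)))) then 1 else 0.

Theorem lemma2p4 :
  forall c : R, 0 < c ->
  exists C0 : R, exists L0 : R, 0 < C0 /\
    forall L t tau : R, 1 <= L -> L0 <= L ->
      Rabs (t - tau) <= c / (ln L) ^ 7 ->
      Rabs tau <= Rpower L (1 / 3) ->
      Im (B tau L ((0%R, t) : C)) = 0 /\
      C0 * L / (ln L) ^ 6 <= Re (B tau L ((0%R, t) : C)).
Proof.
intros c hc. set M := 16000 * (12 * c + 1) + 200.
exists 1, (exp (6 * M)). split; [lra|]. intros L t tau hL1 hL0 ht htau. split; [apply B_Im|].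
rewrite B_Re.
have hM : 200 <= M by unfold M; nra.
have hLpos : 0 < L by lra.
set lam := ln L.
have hlam : 6 * M <= lam. { unfold lam. rewrite -(ln_exp (6 * M)). apply ln_le; auto; apply exp_pos. }
set u := Rpower L (1/6).
have hu0 : 0 < u by unfold u, Rpower; apply exp_pos.
have hlnu : ln u = lam / 6 by unfold u; rewrite ln_Rpower; unfold lam; field.
have hu1 : 1 + lam / 6 <= u. { rewrite -hlnu. have := exp_ineq1_le (ln u). rewrite exp_ln; auto. }
have hu6 : u ^ 6 = L.
{ unfold u. rewrite -Rpower_pow; [|apply exp_pos]. rewrite Rpower_mult.
  replace (1 / 6 * INR 6) with 1 by (simpl; field). apply Rpower_1; auto. }
have hu2 : Rpower L (1/3) = u ^ 2.
{ unfold u. rewrite -Rpower_pow; [|apply exp_pos]. rewrite Rpower_mult.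
  f_equal. simpl; field. }
rewrite hu2 in htau.
have hl2 := ln_lt_2.
have hl2' : ln 2 <= 1. { rewrite -(ln_exp 1). apply ln_le; [lra|]. have := exp_ineq1_le 1. lra. }
set ell := ln (2 * L).
have hell : ell = ln 2 + lam by unfold ell, lam; rewrite ln_mult; lra.
have hell1 : lam + /2 <= ell <= lam + 1 by lra.
set T := Rabs tau.
have hTu2 : T <= u ^ 2 by exact htau.
have hT0 : 0 <= T by apply Rabs_pos.
set eps := / (1000 * ell ^ 2).
have heps0 : 0 < eps. { unfold eps. apply Rinv_0_lt_compat. have : 0 < ell by lra. intros; nra. }
have heps1 : eps < 1/2.
{ unfold eps. apply (Rmult_lt_reg_l (1000 * ell ^ 2)). nra.
  rewrite Rinv_r. nra. nra. }
set eta := Rabs (t - tau) * ell.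
have heta0 : 0 <= eta by unfold eta; apply Rmult_le_pos; [apply Rabs_pos|lra].
set N := Z.to_nat (up (2 * L)).
have step1 : rsum (List.seq 0 (S N)) (fun l => 2 * eps * goodf tau L eps l + (- 2 * eta))
             <= rsum (List.seq 0 (S N)) (hfun tau t L).
{ apply rsum_le. intros l _. unfold hfun, goodf.
  destruct (is_primeb l) eqn:hp; simpl.
  2: { nra. }
  destruct (Rle_dec (INR l) (2 * L)) as [hle|hnle].
  2: { replace (Rleb (INR l) (2 * L)) with false. simpl. nra.
       symmetry. unfold Rleb. destruct (Rle_dec _ _); tauto. }
  replace (Rleb (INR l) (2 * L)) with true; [|symmetry; apply Rleb_true; auto]. simpl.
  have hlp2 := is_primeb_ge2 l hp.
  have hl : 1 <= INR l by rewrite -INR_1; apply le_INR; lia.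
  have hln0 : 0 <= ln (INR l) by rewrite -ln_1; apply ln_le; lra.
  have hln1 : ln (INR l) <= ell by apply ln_le; lra.
  have hsb := sign_bound (cos (tau * ln (INR l))) (cos (t * ln (INR l))).
  have hcd := cos_diff_le (tau * ln (INR l)) (t * ln (INR l)).
  replace (tau * ln (INR l) - t * ln (INR l)) with ((t - tau) * (- ln (INR l))) in hcd by ring.
  rewrite Rabs_mult Rabs_Ropp (Rabs_right (ln (INR l))) in hcd; [|lra].
  have : Rabs (t - tau) * ln (INR l) <= eta. unfold eta. apply Rmult_le_compat_l; [apply Rabs_pos|lra].
  intros hh.
  have := Rabs_pos (cos (tau * ln (INR l))).
  unfold Rleb. destruct (Rle_dec _ _); intros; nra. }
rewrite rsum_plus rsum_scal rsum_const length_seq in step1.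
set G := rsum (List.seq 0 (S N)) (goodf tau L eps) in step1.
have hL3 : 3 <= L. { have := exp_ineq1_le (6 * M). lra. }
have step3 : rsum (List.seq 0 (S N)) (pind L) <= G + rsum (List.seq 0 (S N)) (badf T L eps).
{ unfold G. rewrite -rsum_plus. apply rsum_le. intros l _. unfold pind, goodf, badf.
  destruct (is_primeb l) eqn:hp; simpl; [|destruct (_ && _ && _); lra].
  destruct (Rleb (INR l) (2 * L)) eqn:hle; simpl; [|destruct (_ && _ && _); lra].
  have hlp2 := is_primeb_ge2 l hp.
  replace (Nat.leb 1 l) with true; [|symmetry; apply Nat.leb_le; lia]. simpl.
  have hcT : Rabs (cos (T * ln (INR l))) = Rabs (cos (tau * ln (INR l))).
  { unfold T. destruct (Rle_dec 0 tau). rewrite (Rabs_right tau); [reflexivity|lra].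
    rewrite (Rabs_left tau); [|lra]. replace (- tau * ln (INR l)) with (- (tau * ln (INR l))) by ring.
    rewrite cos_neg. reflexivity. }
  rewrite hcT. unfold Rleb, Rltb. destruct l as [|l0]; [lia|]. simpl. destruct (Rle_dec _ _); destruct (Rlt_dec _ _); lra. }
have step4 := prime_count_lb L hL3. fold N ell in step4.
have hell0 : 1 <= ell by lra.
have step5 : rsum (List.seq 0 (S N)) (badf T L eps) <= 32 * L * eps * ell + u ^ 2 * ell + 1.
{ destruct (Rle_dec (T * ell) 1) as [hs|hs].
  - rewrite bad_zero; auto. have : 0 <= u ^ 2 * ell by apply Rmult_le_pos; [apply pow_le|]; lra. have : 0 <= L * eps * ell by apply Rmult_le_pos; [apply Rmult_le_pos|]; lra. lra.
  - have hT : 0 < T by nra.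
    have hTi : / T < ell. { apply (Rmult_lt_reg_l T); auto. rewrite Rinv_r; lra. }
    have hTi0 : 0 < / T by apply Rinv_0_lt_compat.
    have hd : 4 * eps / T <= 1/2. { unfold Rdiv. have : eps * ell <= 1 / 1000.
        unfold eps. apply (Rmult_le_reg_l (1000 * ell ^ 2)). nra.
        rewrite -Rmult_assoc Rinv_r. nra. nra. nra. }
    have he2 : 0 < eps <= 1/2 by lra.
    apply Rle_trans with (1 := bad_bound T L eps (S N) hT hL1 he2 hd).
    fold ell. have hPI := PI2_1.
    have hP : T * ell / PI <= T * ell.
    { unfold Rdiv. have : / PI <= 1. apply (Rmult_le_reg_l PI). lra. rewrite Rinv_r; lra.
      intros. have : 0 <= T * ell by nra. nra. }
    have hTT : T * / T = 1 by field; lra.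
    unfold Rdiv. unfold Rdiv in hP.
    have : 0 <= T * ell * / PI. apply Rmult_le_pos. nra. apply Rlt_le, Rinv_0_lt_compat; lra.
    have hTu : T * ell <= u ^ 2 * ell by apply Rmult_le_compat_r; lra.
    set a := T * ell * / PI. set b := 2 * L * (8 * eps * / T).
    have hb0 : 0 <= b. unfold b. have : 0 <= eps * / T by apply Rmult_le_pos; lra. intros; nra.
    have hLe : 0 <= L * eps by apply Rmult_le_pos; lra.
    have hb : b <= 16 * L * eps * ell. unfold b.
      have : L * eps * / T <= L * eps * ell by apply Rmult_le_compat_l; lra. nra.
    have hab : a * b <= 16 * L * eps * ell.
      apply Rle_trans with (T * ell * b). apply Rmult_le_compat_r; [lra|unfold a; lra].
      unfold b. replace (T * ell * (2 * L * (8 * eps * / T))) with (16 * L * eps * ell * (T * / T)) by ring.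
      rewrite hTT. lra.
    intros. have ha : a <= u ^ 2 * ell by unfold a; lra.
    replace ((a + 1) * (b + 1)) with (a * b + a + b + 1) by ring. lra. }
have hlam0 : 0 < lam by lra.
set il := / lam.
have hil0 : 0 < il by apply Rinv_0_lt_compat.
have hilam : il * lam = 1 by unfold il; field; lra.
have hell0' : 0 < ell by lra.
set iE := / ell.
have hiE0 : 0 < iE by apply Rinv_0_lt_compat.
have hiEell : iE * ell = 1 by unfold iE; field; lra.
have hepsE : eps = iE * iE / 1000 by unfold eps, iE; field; lra.
have hlu : ell <= 6 * u by lra.
have hu200 : 201 <= u by lra.
have hq : u ^ 2 * ell ^ 2 + ell <= (109/500) * L - (1/2).
{ rewrite -hu6.
  have e1 : ell ^ 2 <= 36 * u ^ 2 by nra.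
  have e2 : u ^ 2 * ell ^ 2 <= 36 * u ^ 4.
  { have : 0 <= u ^ 2 by nra. replace (36 * u ^ 4) with (u ^ 2 * (36 * u ^ 2)) by ring. nra. }
  have e3 : 40000 <= u ^ 2 by nra.
  have e4 : 0 <= u ^ 4 by nra.
  have e5 : 8000 * u ^ 4 <= (109/500) * u ^ 6 - 36 * u ^ 4.
  { replace ((109/500) * u ^ 6 - 36 * u ^ 4) with (u ^ 4 * ((109/500) * u ^ 2 - 36)) by ring. nra. }
  have e6 : 6 * u + (1/2) <= 8000 * u ^ 4.
  { have : u <= u ^ 4. replace (u ^ 4) with (u * u ^ 3) by ring. have : 1 <= u ^ 3 by nra. nra. nra. }
  lra. }
have hP : (L - 1) / (2 * ell) = (L - 1) * iE / 2 by unfold iE; field; lra.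
have hB1 : 32 * L * eps * ell = (4/125) * L * iE.
{ rewrite hepsE. replace (32 * L * (iE * iE / 1000) * ell) with ((4/125) * L * iE * (iE * ell)) by field. rewrite hiEell. ring. }
have hB2 : u ^ 2 * ell + 1 = (u ^ 2 * ell ^ 2 + ell) * iE.
{ replace ((u ^ 2 * ell ^ 2 + ell) * iE) with ((u ^ 2 * ell + 1) * (iE * ell)) by ring. rewrite hiEell. ring. }
have hG : L * iE / 4 <= G.
{ have : (u ^ 2 * ell ^ 2 + ell) * iE <= ((109/500) * L - (1/2)) * iE by apply Rmult_le_compat_r; lra.
  lra. }
have hG2 : L * il ^ 3 / 16000 <= 2 * eps * G.
{ rewrite hepsE.
  have hiE : il / 2 <= iE.
  { apply (Rmult_le_reg_r ell); auto. rewrite hiEell.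
    replace (il / 2 * ell) with (il * ell / 2) by field. have : il * ell <= il * (2 * lam) by apply Rmult_le_compat_l; lra.
    lra. }
  have h1 : 2 * (iE * iE / 1000) * (L * iE / 4) <= 2 * (iE * iE / 1000) * G.
  { apply Rmult_le_compat_l; auto. have : 0 <= iE * iE by nra. lra. }
  have h2 : (il / 2) ^ 3 <= iE ^ 3 by apply pow_incr; lra.
  have h3 : L * il ^ 3 / 16000 = L * (il / 2) ^ 3 / 2000 by field.
  have h4 : 2 * (iE * iE / 1000) * (L * iE / 4) = L * iE ^ 3 / 2000 by field.
  have : L * (il / 2) ^ 3 <= L * iE ^ 3 by apply Rmult_le_compat_l; lra.
  lra. }
have hil7 : c / lam ^ 7 = c * il ^ 7 by unfold il; field; lra.
have heta : eta <= 2 * c * il ^ 6.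
{ unfold eta. rewrite hil7 in ht.
  apply Rle_trans with (c * il ^ 7 * ell). apply Rmult_le_compat_r; lra.
  have h5 : c * il ^ 7 * ell <= c * il ^ 7 * (2 * lam). apply Rmult_le_compat_l. have := pow_lt il 7 hil0. nra. lra.
  replace (c * il ^ 7 * (2 * lam)) with (2 * c * il ^ 6 * (il * lam)) in h5 by ring.
  rewrite hilam in h5. lra. }
have hSN : INR (S N) <= 3 * L.
{ rewrite S_INR. destruct (up_nat (2 * L) ltac:(lra)) as [hN [_ hN2]]. fold N in hN. lra. }
have hfin : L * il ^ 6 + 12 * c * L * il ^ 6 <= L * il ^ 3 / 16000.
{ have hi3 : 0 < il ^ 3 by apply pow_lt.
  have hil1 : il * ((12 * c + 1) * 16000) <= 1.
  { apply (Rmult_le_reg_r lam); auto. replace (il * ((12 * c + 1) * 16000) * lam) with ((il * lam) * ((12 * c + 1) * 16000)) by ring.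
    rewrite hilam. unfold M in hlam. lra. }
  have hilsmall : il <= 1. { apply (Rmult_le_reg_r lam); auto. rewrite hilam. lra. }
  have hil2 : il ^ 3 * ((12 * c + 1) * 16000) <= 1.
  { replace (il ^ 3 * ((12 * c + 1) * 16000)) with (il ^ 2 * (il * ((12 * c + 1) * 16000))) by ring.
    have : il ^ 2 <= 1 by nra. have : 0 <= il * ((12 * c + 1) * 16000) by nra. nra. }
  replace (L * il ^ 6 + 12 * c * L * il ^ 6) with ((L * il ^ 3) * (il ^ 3 * (12 * c + 1))) by ring.
  have hLi3 : 0 < L * il ^ 3 by nra.
  replace (L * il ^ 3 / 16000) with ((L * il ^ 3) * (1 / 16000)) by field.
  apply Rmult_le_compat_l; lra. }
have hgoal : 1 * L / lam ^ 6 = L * il ^ 6 by unfold il; field; lra.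
rewrite hgoal.
apply Rle_trans with (2 := step1).
have : eta * INR (S N) <= 2 * c * il ^ 6 * (3 * L).
{ apply Rmult_le_compat; auto. apply pos_INR. }
lra.
Qed.
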